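(* Let $2\le k\le n$. For every strong digraph $D$ of order $n$, $1\le\kappa_k(D)\le n-1$. Moreover, both bounds are sharp, and $\kappa_k(D)=n-1$ holds if and only if $D\cong\overleftrightarrow{K}_n$ and $k\notin\{4,6\}$.
   Context: Digraphs are finite, without loops and without parallel arcs. $\overleftrightarrow{K}_n$ is the complete digraph on $n$ vertices (both arcs $uv$ and $vu$ for every pair of distinct vertices). A digraph is strong if for every ordered pair of vertices $u,v$ there is a directed path from $u$ to $v$; a one-vertex digraph is strong. For $S\subseteq V(D)$, strong subgraphs $D_1,\dots,D_p$ each containing $S$ are $S$-internally disjoint if $V(D_i)\cap V(D_j)=S$ and $A(D_i)\cap A(D_j)=\emptyset$ for all $i<j$. $\kappa_S(D)$ is the maximum number of $S$-internally disjoint strong subgraphs containing $S$, and $\kappa_k(D)=\min\{\kappa_S(D): S\subseteq V(D),\ |S|=k\}$. *)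

(* Defs.v *)
From mathcomp Require Import all_boot.
Set Implicit Arguments. Unset Strict Implicit. Unset Printing Implicit Defensive.

(* A digraph on a finite vertex type V is an arc relation D : rel V
   (no parallel arcs automatically; loops excluded by [irreflexive D]). *)

Definition strong (V : finType) (D : rel V) : Prop :=
  forall u v : V, connect D u v.

Definition is_subgraph (V : finType) (D : rel V) (Vs : {set V}) (As : {set V * V}) : bool :=
  [forall a in As, [&& D a.1 a.2, a.1 \in Vs & a.2 \in Vs]].

Definition strong_sub (V : finType) (Vs : {set V}) (As : {set V * V}) : bool :=
  [forall u in Vs, forall v in Vs, connect [rel x y | (x, y) \in As] u v].

Definition S_packing (V : finType) (D : rel V) (S : {set V}) (p : nat) : bool :=
  [exists Vs : {ffun 'I_p -> {set V}}, exists As : {ffun 'I_p -> {set V * V}},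
    [forall i, [&& is_subgraph D (Vs i) (As i), S \subset Vs i & strong_sub (Vs i) (As i)]]
    && [forall i, forall j, (i != j) ==> ((Vs i :&: Vs j == S) && [disjoint As i & As j])]].

(* For #|S| >= 2 every such subgraph has an arc and the arc
   sets are disjoint, so this number is at most #|V|^2; the max below is
   then the true maximum. *)
Definition kappaS (V : finType) (D : rel V) (S : {set V}) : nat :=
  \max_(p < (#|V| ^ 2).+1 | S_packing D S p) p.

Definition kappa_k (V : finType) (D : rel V) (k : nat) : nat :=
  \big[minn/(#|V| ^ 2)]_(S : {set V} | #|S| == k) kappaS D S.

Definition complete_digraph (n : nat) : rel 'I_n := fun u v => u != v.

Definition digraph_iso (V W : finType) (D : rel V) (E : rel W) : Prop :=
  exists f : V -> W, bijective f /\ forall u v, D u v = E (f u) (f v).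

(* Main.v *)
Require Import Defs.
From mathcomp Require Import all_boot zify.
Set Implicit Arguments. Unset Strict Implicit. Unset Printing Implicit Defensive.

Ltac des_if := repeat match goal with
 | |- context [if ?b then _ else _] => destruct b eqn:?
 | H : context [if ?b then _ else _] |- _ => destruct b eqn:?
end.
Definition subm r x t := if t <= x then x - t else x + 2*r - t.
Definition addm r y t := if y + t < 2*r then y + t else y + t - 2*r.
Definition fo r t x :=
  if 2*r <= x then t else
  let y := subm r x t in
  if y < 1 then addm r 1 t else if y < r then addm r (2*r - y) t
  else if y < r+1 then 2*r else addm r (2*r - y + 1) t.

Lemma fo_lt r t x : 0 < r -> t < 2*r -> x <= 2*r -> fo r t x <= 2*r.
Proof. rewrite /fo /subm /addm => *; des_if; lia. Qed.
Lemma fo_neq r t x : 0 < r -> t < 2*r -> x <= 2*r -> fo r t x != x.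
Proof. rewrite /fo /subm /addm => *; des_if; lia. Qed.
Lemma fo_injt r s t x : 0 < r -> s < 2*r -> t < 2*r -> x <= 2*r ->
  fo r s x = fo r t x -> s = t.
Proof. rewrite /fo /subm /addm => *; des_if; lia. Qed.
Lemma fo_injx r t x y : 0 < r -> t < 2*r -> x <= 2*r -> y <= 2*r ->
  fo r t x = fo r t y -> x = y.
Proof. rewrite /fo /subm /addm => *; des_if; lia. Qed.
Definition posf r y := if y < 1 then 0 else if y < r+1 then 2*y - 1 else 2*(2*r - y).
Definition mu r t x := if 2*r <= x then 0 else 2*r - posf r (subm r x t).

Lemma fo_mu r t x : 0 < r -> t < 2*r -> x < 2*r ->
  fo r t x = 2*r \/ (fo r t x < 2*r /\ mu r t (fo r t x) < mu r t x).
Proof. rewrite /fo /mu /posf /subm /addm => *; des_if; lia. Qed.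

Lemma fo_reach r t x : 0 < r -> t < 2*r -> x <= 2*r -> exists m, iter m (fo r t) x = 2*r.
Proof.
move=> r0 tr; move: {2}(mu r t x) (leqnn (mu r t x)) => b; elim: b x => [|b IH] x.
  move=> hm hx; exists 0 => /=. move: hm; rewrite /mu /posf /subm => *; des_if; lia.
move=> hm hx; case: (x =P 2*r) => [->|xn]; first by exists 0.
have xl : x < 2*r by lia.
have [e|[h1 h2]] := fo_mu r0 tr xl; first by exists 1.
have h3 : mu r t (fo r t x) <= b by lia.
have [m hm'] := IH (fo r t x) h3 (ltnW h1).
by exists m.+1; rewrite iterSr.
Qed.

Definition ge r x :=
 if 2*r+1 <= x then 2*r else if 2*r <= x then 0 else
 if x + 3 < r then x+2 else if x + 2 < r then r+1 else if x + 1 < r then r-1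
 else if x < r then r else if x + 3 < 2*r then x+2 else if x + 2 < 2*r then 2*r+1
 else if x + 1 < 2*r then 2*r-1 else 1.
Definition aa r t := if t < 1 then 2*r else if t + 2 < r then t + r - 1
 else if t + 1 < r then r-2 else if t < r then r-1 else if t < r+1 then 2*r-1
 else if t + 2 < 2*r then t - r - 1 else if t + 1 < 2*r then 2*r-2 else r-3.
Definition lab r x := if x + 3 < r then x + r + 1 else if x + 2 < r then 2*r-1
 else if x + 1 < r then r-2 else if x < r then r-1 else if x + 3 < 2*r then x + 1 - r
 else if x + 2 < 2*r then 0 else if x + 1 < 2*r then 2*r-2 else if x < 2*r then r else 0.
Definition pg r x :=
  if 2*r+1 <= x then 2*r+1 else if 2*r <= x then 0 else
  if ~~ odd r then
    (if ~~ odd x then (if x < r then x./2 + 1 else x./2 + 2)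
     else if x + 1 < r then r + 3 + x./2 else if x < r then r./2 + 1
     else if x + 1 < 2*r then r + 2 + x./2 else r + 2)
  else
    (if ~~ odd x then (if x + 1 < r then x./2 + 1 else if x < r then 3 * r./2 + 2 else x./2)
     else if x < r then r + 1 + x./2 else if x + 1 < 2*r then r + 2 + x./2 else r).

Lemma E1 r t : 2 < r -> t < 2*r -> fo r t (aa r t) = ge r (aa r t).
Proof. rewrite /fo /aa /ge /subm /addm => *; des_if; lia. Qed.
Lemma E2 r s t : 2 < r -> s < 2*r -> t < 2*r -> aa r s = aa r t -> s = t.
Proof. rewrite /aa => *; des_if; lia. Qed.
Lemma E3 r x : 2 < r -> x <= 2*r -> x != 2*r-3 -> lab r x < 2*r /\ aa r (lab r x) = x.
Proof. rewrite /aa /lab => *; des_if; lia. Qed.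
Lemma E4 r t : 2 < r -> t < 2*r -> aa r t <= 2*r /\ aa r t != 2*r-3.
Proof. rewrite /aa => *; des_if; lia. Qed.
Lemma ge_lt r x : 2 < r -> x <= 2*r+1 -> ge r x <= 2*r+1.
Proof. rewrite /ge => *; des_if; lia. Qed.
Lemma ge_neq r x : 2 < r -> x <= 2*r+1 -> ge r x != x.
Proof. rewrite /ge => *; des_if; lia. Qed.
Lemma ge_inj r x y : 2 < r -> x <= 2*r+1 -> y <= 2*r+1 -> ge r x = ge r y -> x = y.
Proof. rewrite /ge => *; des_if; lia. Qed.
Lemma ge_pg r x : 2 < r -> x <= 2*r -> pg r (ge r x) = (pg r x).+1.
Proof. rewrite /ge /pg => *; des_if; lia. Qed.
Lemma pg_le r x : 2 < r -> x <= 2*r+1 -> pg r x <= 2*r+1.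
Proof. rewrite /pg => *; des_if; lia. Qed.

Definition NHD N (f : nat -> nat -> nat) :=
 [/\ forall t x, t < N.-1 -> x < N -> f t x < N,
     forall t x, t < N.-1 -> x < N -> f t x != x,
     forall x s t, x < N -> s < N.-1 -> t < N.-1 -> f s x = f t x -> s = t &
     forall t x y, t < N.-1 -> x < N -> y < N -> exists m, iter m (f t) x = y].

Definition liftF N (g : nat -> nat) (x : 'I_N) : 'I_N := insubd x (g x).

Lemma liftF_val N g (x : 'I_N) : (forall y, y < N -> g y < N) -> val (liftF g x) = g x.
Proof. by move=> hg; rewrite /liftF val_insubd hg. Qed.

Lemma liftF_iter N g m (x : 'I_N) : (forall y, y < N -> g y < N) ->
  val (iter m (liftF g) x) = iter m g x.
Proof.
move=> hg; elim: m => [|m IH] //=; by rewrite liftF_val ?IH // -IH.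
Qed.

Lemma reach_fconnect N g (x y : 'I_N) : (forall y, y < N -> g y < N) ->
  (exists m, iter m g x = y) -> fconnect (liftF g) x y.
Proof.
move=> hg [m hm]; have -> : y = iter m (liftF g) x.
  by apply: val_inj; rewrite liftF_iter.
exact: fconnect_iter.
Qed.

Lemma fconnect_reach N g (x y : 'I_N) : (forall y, y < N -> g y < N) ->
  fconnect (liftF g) x y -> exists m, iter m g x = y.
Proof.
move=> hg /iter_findex h; exists (findex (liftF g) x y).
by rewrite -liftF_iter // h.
Qed.

Lemma via_hub N g z : z < N ->
  (forall x, x < N -> exists m, iter m g x = z) ->
  (forall y, y < N -> exists m, iter m g z = y) ->
  forall x y, x < N -> y < N -> exists m, iter m g x = y.
Proof.
move=> zN h1 h2 x y xN yN; have [m1 e1] := h1 x xN; have [m2 e2] := h2 y yN.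
by exists (m2 + m1); rewrite iterD e1.
Qed.

Lemma reach_sym N g z : z < N -> (forall y, y < N -> g y < N) ->
  (forall x y, x < N -> y < N -> g x = g y -> x = y) ->
  (forall x, x < N -> exists m, iter m g x = z) ->
  forall x y, x < N -> y < N -> exists m, iter m g x = y.
Proof.
move=> zN hg hinj h1; apply: (via_hub zN h1) => y yN.
have inj : injective (liftF g : 'I_N -> 'I_N).
  move=> a b e; apply: val_inj; apply: hinj; rewrite ?ltn_ord //.
  by have := congr1 val e; rewrite !liftF_val.
have h : fconnect (liftF g) (Ordinal zN) (Ordinal yN).
  rewrite fconnect_sym //; apply: reach_fconnect => //=; exact: h1.
exact: (fconnect_reach hg h).
Qed.

Lemma NHD2 : NHD 2 (fun _ x => 1 - x).
Proof.
split=> //=.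
- move=> t x _ xl; lia.
- move=> t x _ xl; lia.
- move=> x s t _; case: s; case: t => //.
- move=> t x y _ xl yl; case: (x =P y) => [->|ne]; first by exists 0.
  exists 1 => /=; lia.
Qed.

Lemma NHDodd r : 0 < r -> NHD (2*r+1) (fo r).
Proof.
move=> r0; have e : (2*r+1).-1 = 2*r by lia.
split; rewrite e.
- move=> t x tl xl; have := fo_lt r0 tl (_ : x <= 2*r); lia.
- move=> t x tl xl; apply: fo_neq; lia.
- move=> x s t xl sl tl; apply: fo_injt => //; lia.
- move=> t x y tl xl yl.
  have zN : 2*r < 2*r+1 by lia.
  have hg : forall z, z < 2*r+1 -> fo r t z < 2*r+1.
    move=> z zl; have := fo_lt r0 tl (_ : z <= 2*r); lia.
  have hi : forall a b, a < 2*r+1 -> b < 2*r+1 -> fo r t a = fo r t b -> a = b.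
    move=> a b al bl; apply: fo_injx => //; lia.
  have hr : forall z, z < 2*r+1 -> exists m, iter m (fo r t) z = 2*r.
    move=> z zl; apply: fo_reach => //; lia.
  exact: (reach_sym zN hg hi hr).
Qed.

Definition fe r t x :=
  if t == 2*r then ge r x else if x == 2*r+1 then fo r t (aa r t)
  else if x == aa r t then 2*r+1 else fo r t x.

Lemma ge_reach r x : 2 < r -> x <= 2*r+1 -> exists m, iter m (ge r) x = 2*r+1.
Proof.
move=> r3; move: {2}(2*r+1 - pg r x) (leqnn (2*r+1 - pg r x)) => b; elim: b x => [|b IH] x.
  move=> hm hx; exists 0 => /=. move: hm; rewrite /pg => *; des_if; lia.
move=> hm hx; case: (x =P 2*r+1) => [->|xn]; first by exists 0.
have xl : x <= 2*r by lia.
have h1 := ge_pg r3 xl; have h2 := ge_lt r3 hx.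
have h4 := pg_le r3 hx.
have h3 : 2*r+1 - pg r (ge r x) <= b by lia.
have [m hm'] := IH (ge r x) h3 h2.
by exists m.+1; rewrite iterSr.
Qed.

Lemma fo_strong r t : 0 < r -> t < 2*r -> forall x y, x <= 2*r -> y <= 2*r ->
  exists m, iter m (fo r t) x = y.
Proof.
move=> r0 tl x y xl yl; have [_ _ _ h] := NHDodd r0.
apply: h; lia.
Qed.

Lemma fe_lift r t m x : 2 < r -> t < 2*r -> x <= 2*r ->
  exists m', iter m' (fe r t) x = iter m (fo r t) x.
Proof.
move=> r3 tl; elim: m x => [|m IH] x xl; first by exists 0.
have r0 : 0 < r by lia.
have h1 : fo r t x <= 2*r by apply: fo_lt.
have [m' e] := IH _ h1.
case: (x =P aa r t) => [ex|nx].
- exists m'.+2; rewrite iterSr iterSr iterSr.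
  have -> : fe r t x = 2*r+1.
    rewrite /fe ifF; last by apply/eqP; lia.
    by rewrite ifF ?ex ?eqxx //; apply/eqP; lia.
  rewrite -e; congr (iter _ _ _); rewrite /fe ifF ?eqxx; last by apply/eqP; lia.
  by rewrite ex.
- exists m'.+1; rewrite iterSr iterSr -e; congr (iter _ _ _).
  rewrite /fe ifF; last by apply/eqP; lia.
  rewrite ifF; last by apply/eqP; lia.
  by rewrite ifF //; apply/eqP.
Qed.

Lemma fe_lt2r r t x : t < 2*r -> fe r t x =
  if x == 2*r+1 then fo r t (aa r t) else if x == aa r t then 2*r+1 else fo r t x.
Proof. by move=> tl; rewrite /fe ifF //; apply/eqP; lia. Qed.

Lemma NHDeven r : 2 < r -> NHD (2*r+2) (fe r).
Proof.
move=> r3; have r0 : 0 < r by lia.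
have e : (2*r+2).-1 = 2*r+1 by lia.
split; rewrite e.
- move=> t x tl xl; rewrite /fe; case: eqP => [_|tn].
    have := ge_lt r3 (_ : x <= 2*r+1); lia.
  have tl' : t < 2*r by lia.
  have [a1 a2] := E4 r3 tl'.
  case: eqP => [_|xn]; first by have := fo_lt r0 tl' a1; lia.
  case: eqP => [_|_]; first by lia.
  have := fo_lt r0 tl' (_ : x <= 2*r); lia.
- move=> t x tl xl; rewrite /fe; case: (t =P 2*r) => [_|tn].
    apply: ge_neq => //; lia.
  have tl' : t < 2*r by lia.
  have [a1 a2] := E4 r3 tl'.
  case: (x =P 2*r+1) => [->|xn]; first by have := fo_lt r0 tl' a1; lia.
  case: (x =P aa r t) => [->|_]; first by lia.
  apply: fo_neq => //; lia.
- move=> x s t xl sl tl.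
  have key1 : forall s1, s1 < 2*r -> fe r s1 x != ge r x.
    move=> s1 sl'; have [a1 a2] := E4 r3 sl'.
    rewrite fe_lt2r //.
    case: (x =P 2*r+1) => [ex|nx].
      rewrite E1 // ex; apply/eqP => h.
      have l4 : aa r s1 <= 2*r+1 by lia.
      have := ge_inj r3 l4 (leqnn _) h; lia.
    case: (x =P aa r s1) => [ex|nx2].
      apply/eqP => h; have g3 : ge r (2*r-3) = 2*r+1 by rewrite /ge; des_if; lia.
      rewrite -g3 in h; have l3 : 2*r-3 <= 2*r+1 by lia.
      have l4 : x <= 2*r+1 by lia.
      have := ge_inj r3 l3 l4 h; move: a2; rewrite -ex; lia.
    case: (x =P 2*r-3) => [ex3|nx3].
      have g3 : ge r x = 2*r+1 by rewrite ex3 /ge; des_if; lia.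
      have l4 : x <= 2*r by lia.
      rewrite g3; have := fo_lt r0 sl' l4; lia.
    have xl1 : x <= 2*r by lia.
    have xl3 : x != 2*r-3 by apply/eqP.
    have [l1 l2] := E3 r3 xl1 xl3.
    have := E1 r3 l1; rewrite l2 => <-; apply/eqP => h.
    have hh := fo_injt r0 sl' l1 xl1 h; apply: nx2; by rewrite -{1}l2 -hh.
  have key2 : forall s1 t1, s1 < 2*r -> t1 < 2*r -> fe r s1 x = fe r t1 x -> s1 = t1.
    move=> s1 t1 sl' tl'; have [a1 a2] := E4 r3 sl'; have [b1 b2] := E4 r3 tl'.
    rewrite !fe_lt2r //.
    case: (x =P 2*r+1) => [ex|nx].
      rewrite !E1 // => h; apply: (E2 r3 sl' tl').
      apply: (ge_inj r3 _ _ h); lia.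
    case: (x =P aa r s1) => [ex|nx2]; case: (x =P aa r t1) => [ex'|nx3].
    - move=> _; apply: (E2 r3 sl' tl'); by rewrite -ex -ex'.
    - have l4 : x <= 2*r by lia.
      have := fo_lt r0 tl' l4; lia.
    - have l4 : x <= 2*r by lia.
      have := fo_lt r0 sl' l4; lia.
    - apply: fo_injt => //; lia.
  case: (s =P 2*r) => [es|ns]; case: (t =P 2*r) => [et|nt].
  + by rewrite es et.
  + have tl' : t < 2*r by lia.
    have fs : fe r s x = ge r x by rewrite /fe es eqxx.
    move=> h; move: (key1 t tl'); by rewrite -h fs eqxx.
  + have sl' : s < 2*r by lia.
    have ft : fe r t x = ge r x by rewrite /fe et eqxx.
    move=> h; move: (key1 s sl'); by rewrite h ft eqxx.
  + apply: key2; lia.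
- move=> t x y tl xl yl.
  have zN : 2*r+1 < 2*r+2 by lia.
  case: (t =P 2*r) => [et|nt].
    have ef : fe r t =1 ge r by move=> z; rewrite /fe et eqxx.
    have [m hm] : exists m, iter m (ge r) x = y.
      apply: (@reach_sym (2*r+2) (ge r) (2*r+1) zN) => //.
      + move=> z zl; have zz : z <= 2*r+1 by lia.
        have := ge_lt r3 zz; lia.
      + move=> a b al bl; apply: ge_inj => //; lia.
      + move=> z zl; apply: ge_reach => //; lia.
    by exists m; rewrite (eq_iter ef).
  have tl' : t < 2*r by lia.
  have [a1 a2] := E4 r3 tl'.
  apply: (via_hub zN) => // [z zl|z zl].
  + case: (z =P 2*r+1) => [->|zn]; first by exists 0.
    have zl' : z <= 2*r by lia.
    have [m hm] := fo_strong r0 tl' zl' a1.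
    have [m' hm'] := fe_lift m r3 tl' zl'.
    exists m'.+1; rewrite iterS hm' hm fe_lt2r // ifF ?eqxx //; apply/eqP; lia.
  + case: (z =P 2*r+1) => [->|zn]; first by exists 0.
    have zl' : z <= 2*r by lia.
    have w1 := fo_lt r0 tl' a1.
    have [m hm] := fo_strong r0 tl' w1 zl'.
    have [m' hm'] := fe_lift m r3 tl' w1.
    exists m'.+1; rewrite iterSr -hm -hm'; congr (iter _ _ _).
    by rewrite fe_lt2r // eqxx.
Qed.

Fixpoint allL (n m : nat) : seq (seq nat) :=
  match m with 0 => [:: [::]] | m'.+1 => [seq x :: l | x <- iota 0 n, l <- allL n m'] end.
Definition cycP k (l : seq nat) := uniq l && uniq (traject (fun x => nth 0 l x) 0 k).
Definition Cands k := filter (cycP k) (allL k k).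
Definition compat k (l1 l2 : seq nat) := all (fun i => nth 0 l1 i != nth 0 l2 i) (iota 0 k).
Fixpoint srch k (d : nat) (cands : seq (seq nat)) : bool :=
  match d with 0 => true | d'.+1 => has (fun c => srch k d' (filter (compat k c) cands)) cands end.

Lemma srch4 : srch 4 3 (Cands 4) = false. Proof. by vm_compute. Qed.
Lemma srch6 : srch 6 5 (Cands 6) = false. Proof. by vm_compute. Qed.

Lemma mem_allL n m l : size l = m -> all (fun x => x < n) l -> l \in allL n m.
Proof.
elim: m l => [|m IH] [|x l] //= [sl] /andP [xn al].
apply: (allpairs_f (fun x l => x :: l)); first by rewrite mem_iota.
exact: IH.
Qed.

Lemma srch_sound k d cands (L : nat -> seq nat) :
  (forall j, j < d -> L j \in cands) ->
  (forall i j, i < d -> j < d -> i != j -> compat k (L i) (L j)) -> srch k d cands.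
Proof.
elim: d cands L => [|d IH] cands L //= hm hc.
apply/hasP; exists (L 0); first exact: hm.
apply: (IH _ (fun j => L j.+1)).
- move=> j jd; rewrite mem_filter hm // andbT; apply: hc => //.
- move=> i j id jd ij; apply: hc => //.
Qed.

Definition HD k (s : nat -> 'I_k -> 'I_k) :=
 [/\ forall j, j < k.-1 -> forall x y, fconnect (s j) x y,
     forall x i j, i < k.-1 -> j < k.-1 -> s i x = s j x -> i = j &
     forall j x, j < k.-1 -> s j x != x].
Arguments HD : clear implicits.

Lemma HD_srch k s : HD k s -> srch k k.-1 (Cands k).
Proof.
move=> [hf hi hn].
case: k s hf hi hn => [|k] s hf hi hn; first by [].
pose L j := [seq val (s j i) | i <- enum 'I_k.+1].
have nthL : forall j (y : 'I_k.+1), nth 0 (L j) y = s j y.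
  move=> j y; rewrite (nth_map y) ?size_enum_ord //; congr (val (s j _)).
  by apply: val_inj; rewrite /= nth_enum_ord.
have trL : forall j m (x : 'I_k.+1),
    traject (fun a => nth 0 (L j) a) x m = map val (traject (s j) x m).
  move=> j; elim=> [|m IH] x //=; by rewrite nthL IH.
apply: (srch_sound (L := L)).
- move=> j jk; rewrite mem_filter; apply/andP; split; last first.
    apply: mem_allL; first by rewrite size_map size_enum_ord.
    by apply/allP => a /mapP [b _ ->]; exact: ltn_ord.
  have allc : forall x y, fconnect (s j) x y by exact: hf.
  have inj : injective (s j).
    move=> a b e.
    have hc : fcycle (s j) (orbit (s j) a) by rewrite -fconnect_f allc.
    move/injectivePcycle: hc => hc; apply: hc => //; by rewrite -fconnect_orbit allc.
  rewrite /cycP map_inj_uniq ?enum_uniq; last exact: (inj_comp val_inj inj).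
  have e0 := trL j k.+1 ord0; change (nat_of_ord (ord0 : 'I_k.+1)) with 0 in e0.
  rewrite e0 andTb.
  rewrite map_inj_uniq; last exact: val_inj.
  have ord : order (s j) ord0 = k.+1.
    rewrite /order; transitivity #|'I_k.+1|; last exact: card_ord.
    apply: eq_card => y; rewrite [RHS]inE; exact: allc.
  by have := orbit_uniq (s j) ord0; rewrite /orbit ord.
- move=> i j ik jk ij; apply/allP => a; rewrite mem_iota add0n => /andP [_ ak].
  have -> : a = val (Ordinal ak) by [].
  rewrite !nthL; apply/eqP => /val_inj e; move: ij; by rewrite (hi _ _ _ ik jk e) eqxx.
Qed.

Lemma no_HD4 s : ~ HD 4 s.
Proof. by move=> /HD_srch; rewrite srch4. Qed.
Lemma no_HD6 s : ~ HD 6 s.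
Proof. by move=> /HD_srch; rewrite srch6. Qed.

Lemma NHD_HD k f : NHD k f -> exists s, HD k s.
Proof.
case=> hr hn hi hs.
exists (fun j => liftF (f j : nat -> nat)); split.
- move=> j jk x y; apply: reach_fconnect; first by move=> z; apply: hr.
  exact: hs.
- move=> x i j ik jk e; apply: (hi x) => //.
  by have := congr1 val e; rewrite !liftF_val // => z; [apply: hr|apply: hr].
- move=> j x jk; apply/eqP => /(congr1 val); rewrite liftF_val; last by move=> z; apply: hr.
  by apply/eqP; apply: hn.
Qed.

Lemma HD_exists k : 2 <= k -> k != 4 -> k != 6 -> exists s, HD k s.
Proof.
move=> k2 k4 k6.
case: (k =P 2) => [->|kn2]; first exact: (NHD_HD NHD2).
case/boolP: (odd k) => ko.
  have e : k = 2 * k./2 + 1 by lia.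
  rewrite e; apply: NHD_HD; apply: NHDodd; lia.
have e : k = 2 * (k./2 - 1) + 2 by lia.
rewrite e; apply: NHD_HD; apply: NHDeven; lia.
Qed.

Definition pack (V : finType) (D : rel V) (S : {set V}) p (Vs : 'I_p -> {set V}) (As : 'I_p -> {set V * V}) :=
 (forall i, [/\ is_subgraph D (Vs i) (As i), S \subset Vs i & strong_sub (Vs i) (As i)]) /\
 (forall i j, i != j -> Vs i :&: Vs j = S /\ [disjoint As i & As j]).

Lemma S_packingP (V : finType) (D : rel V) (S : {set V}) p :
  reflect (exists Vs As, @pack V D S p Vs As) (S_packing D S p).
Proof.
apply: (iffP idP).
- case/existsP => Vs /existsP [As /andP [/forallP h1 /forallP h2]].
  exists Vs, As; split.
  + move=> i; case/and3P: (h1 i) => *; by split.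
  + move=> i j ij; move/forallP: (h2 i) => /(_ j) /implyP /(_ ij) /andP [/eqP e d]; by split.
- case=> Vs [As [h1 h2]]; apply/existsP; exists [ffun i => Vs i].
  apply/existsP; exists [ffun i => As i].
  apply/andP; split; apply/forallP => i; rewrite ?ffunE.
  + by case: (h1 i) => a b c; apply/and3P.
  + apply/forallP => j; apply/implyP => ij; rewrite !ffunE.
    by case: (h2 i j ij) => -> d; rewrite eqxx.
Qed.

Lemma subgraphP (V : finType) (D : rel V) Vs As a b :
  is_subgraph D Vs As -> (a,b) \in As -> [/\ D a b, a \in Vs & b \in Vs].
Proof. by move/forall_inP => h /h /and3P [] /=. Qed.

Lemma strongP (V : finType) (Vs : {set V}) As a b : strong_sub Vs As -> a \in Vs -> b \in Vs ->
  connect [rel x y | (x,y) \in As] a b.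
Proof. by move/forall_inP => h /h /forall_inP h' /h'. Qed.

Lemma disjP (T : finType) (A B : {set T}) :
  reflect (forall x, x \in A -> x \in B -> False) [disjoint A & B].
Proof.
rewrite disjoint_subset; apply: (iffP subsetP) => h x xa.
- by move=> xb; have := h x xa; rewrite inE xb.
- by rewrite inE; apply/negP; exact: h x xa.
Qed.

Lemma out_arc (V : finType) (D : rel V) (S : {set V}) p Vs As u v : @pack V D S p Vs As ->
  u \in S -> v \in S -> u != v -> forall i, exists w, (u,w) \in As i.
Proof.
move=> [h1 _] uS vS uv i; case: (h1 i) => _ sub st.
have := strongP st (subsetP sub u uS) (subsetP sub v vS).
case/connectP => [[|w q]] /= pth lst; first by move: uv; rewrite lst eqxx.
by exists w; case/andP: pth.
Qed.

Definition outn (V : finType) (As : {set V * V}) u := odflt u [pick w | (u,w) \in As].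

Lemma outnP (V : finType) (As : {set V * V}) u : (exists w, (u,w) \in As) -> (u, outn As u) \in As.
Proof. by move=> [w hw]; rewrite /outn; case: pickP => [x hx|/(_ w)] //=; rewrite hw. Qed.

Lemma outn_inj (V : finType) (D : rel V) (S : {set V}) p Vs As u v : @pack V D S p Vs As ->
  u \in S -> v \in S -> u != v -> injective (fun i => outn (As i) u).
Proof.
move=> pk uS vS uv i j e; apply/eqP; apply/negPn/negP => ij.
have [_ /(_ i j ij) [_ /disjP d]] := pk.
apply: (d (u, outn (As i) u)); first by apply: outnP; exact: out_arc pk uS vS uv i.
by rewrite e; apply: outnP; exact: out_arc pk uS vS uv j.
Qed.

Lemma outdeg_bound (V : finType) (D : rel V) (S : {set V}) p Vs As u v : @pack V D S p Vs As ->
  u \in S -> v \in S -> u != v -> p <= #|[set w | D u w]|.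
Proof.
move=> pk uS vS uv.
have inj := outn_inj pk uS vS uv.
rewrite -{1}(card_ord p) -(card_imset 'I_p inj).
apply: subset_leq_card; apply/subsetP => w /imsetP [i _ ->]; rewrite inE.
have [h1 _] := pk; case: (h1 i) => sg _ _.
by case: (subgraphP sg (outnP (out_arc pk uS vS uv i))).
Qed.

Lemma S_packing0 (V : finType) (D : rel V) (S : {set V}) : S_packing D S 0.
Proof. by apply/S_packingP; exists (fun _ => set0), (fun _ => set0); split => -[]. Qed.

Lemma kS_ge (V : finType) (D : rel V) (S : {set V}) p :
  S_packing D S p -> p <= #|V|^2 -> p <= kappaS D S.
Proof.
move=> h hp; rewrite /kappaS.
have hp' : p < (#|V|^2).+1 by [].
exact: (@leq_bigmax_cond _ _ (fun i : 'I_(#|V|^2).+1 => val i) (Ordinal hp') h).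
Qed.

Lemma kS_le (V : finType) (D : rel V) (S : {set V}) b :
  (forall p, S_packing D S p -> p <= b) -> kappaS D S <= b.
Proof. by move=> h; apply/bigmax_leqP => i; apply: h. Qed.

Lemma kS_attain (V : finType) (D : rel V) (S : {set V}) : S_packing D S (kappaS D S).
Proof.
rewrite /kappaS; apply: (big_ind (fun x => S_packing D S x)) => //.
- exact: S_packing0.
- by move=> x y hx hy; rewrite /maxn; case: ifP.
Qed.

Lemma bigmin_le (I : eqType) (r : seq I) (P : pred I) (F : I -> nat) i0 j :
  j \in r -> P j -> \big[minn/i0]_(i <- r | P i) F i <= F j.
Proof.
elim: r => // a r IH; rewrite inE big_cons; case/orP => [/eqP<-|jr] Pj.
  by rewrite Pj geq_minl.
by case: ifP => _; [rewrite geq_min IH ?orbT | exact: IH].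
Qed.

Lemma kk_le (V : finType) (D : rel V) k (S : {set V}) : #|S| = k -> kappa_k D k <= kappaS D S.
Proof.
by move=> hS; rewrite /kappa_k; apply: bigmin_le; [rewrite mem_index_enum | apply/eqP].
Qed.

Lemma kk_ge (V : finType) (D : rel V) k b : b <= #|V|^2 ->
  (forall S : {set V}, #|S| = k -> b <= kappaS D S) -> b <= kappa_k D k.
Proof.
move=> hb h; rewrite /kappa_k; apply: (big_ind (fun x => b <= x)) => //.
- by move=> x y hx hy; rewrite leq_min hx hy.
- by move=> S /eqP; apply: h.
Qed.

Lemma subset_card (V : finType) (A : {set V}) m : m <= #|A| -> exists B : {set V}, B \subset A /\ #|B| = m.
Proof.
elim: m => [|m IH] h; first by exists set0; rewrite sub0set cards0.
have [B [BA cB]] := IH (ltnW h).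
have : 0 < #|A :\: B| by rewrite cardsD (setIidPr BA) cB subn_gt0.
rewrite card_gt0 => /set0Pn [x /setDP [xA xB]].
exists (x |: B); rewrite subUset sub1set xA BA cardsU1 xB cB; split => //.
Qed.

Lemma two_in (V : finType) (S : {set V}) : 1 < #|S| -> exists u v, [/\ u \in S, v \in S & u != v].
Proof. by move/card_gt1P. Qed.

Lemma construct (V : finType) (D : rel V) (S : {set V}) k s :
  (forall u v, D u v = (u != v)) -> #|S| = k -> 1 < k -> HD k s -> S_packing D S (#|V| - 1).
Proof.
move=> Dc cS k1 [hf hI hn].
have [x0 x0S] : exists x0, x0 \in S by apply/set0Pn; rewrite -card_gt0 cS; lia.
have k0 : 0 < k by lia.
pose i0 : 'I_k := Ordinal k0.
have sz : size (enum S) = k by rewrite -cardE.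
pose h (x : 'I_k) := nth x0 (enum S) x.
pose hinv (v : V) : 'I_k := insubd i0 (index v (enum S)).
have hS x : h x \in S by rewrite -mem_enum mem_nth // sz.
have hinj : injective h.
  by move=> a b /eqP; rewrite nth_uniq ?sz ?enum_uniq // => /eqP; apply: val_inj.
have hK v : v \in S -> h (hinv v) = v.
  move=> vS; have ix : index v (enum S) < k by rewrite -[k]sz index_mem mem_enum.
  by rewrite /h /hinv val_insubd ix nth_index ?mem_enum.
pose A (j : nat) := [set (h x, h (s j x)) | x : 'I_k].
have Aconn j m x : connect [rel a b | (a,b) \in A j] (h x) (h (iter m (s j) x)).
  elim: m => [|m IH]; first exact: connect0.
  rewrite iterS; apply: connect_trans IH _; apply: connect1 => /=.
  by apply/imsetP; exists (iter m (s j) x).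
pose n := #|V|.
pose W := enum (~: S).
have szW : size W = n - k by rewrite -cardE cardsCs setCK cS.
pose w (i : nat) := nth x0 W (i - k.-1).
have wS (i : 'I_(n-1)) : k.-1 <= i -> w i \notin S.
  move=> ki; have : w i \in W by apply: mem_nth; rewrite szW; have := ltn_ord i; lia.
  by rewrite mem_enum inE.
have winj (i j : 'I_(n-1)) : k.-1 <= i -> k.-1 <= j -> w i = w j -> i = j.
  have li := ltn_ord i; have lj := ltn_ord j.
  move=> ki kj /eqP; rewrite nth_uniq ?enum_uniq ?szW //; try lia.
  move=> /eqP e; apply: val_inj => /=; lia.
pose Vs (i : 'I_(n-1)) := if i < k.-1 then S else w i |: S.
pose As (i : 'I_(n-1)) := if i < k.-1 then A i
  else [set (a, w i) | a in S] :|: [set (w i, a) | a in S].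
apply/S_packingP; exists Vs, As; split.
- move=> i; rewrite /Vs /As; case: ltnP => hi.
  + split.
    * apply/forall_inP => -[a b] /imsetP [x _ [-> ->]] /=.
      rewrite Dc !hS !andbT; apply/eqP => /hinj e.
      by move: (hn i x hi); rewrite -e eqxx.
    * exact: subxx.
    * apply/forall_inP => u uS; apply/forall_inP => v vS.
      rewrite -(hK u uS) -(hK v vS).
      have /iter_findex <- := hf i hi (hinv u) (hinv v).
      exact: Aconn.
  + have wi := wS i hi.
    have nw : forall c, c \in S -> c != w i.
      by move=> c0 hc; apply/eqP => e; move: wi; rewrite -e hc.
    split.
    * apply/forall_inP => -[a b]; rewrite inE => /orP [] /imsetP [c cS' [-> ->]] /=;
        rewrite Dc !inE eqxx cS' ?orbT /= andbT ?nw // eq_sym nw //.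
    * exact: subsetUr.
    * have cw : forall u, u \in w i |: S -> connect [rel x y | (x,y) \in
          [set (a, w i) | a in S] :|: [set (w i, a) | a in S]] u (w i).
        move=> u; rewrite !inE => /orP [/eqP->|uS]; first exact: connect0.
        by apply: connect1; rewrite /= inE; apply/orP; left; apply/imsetP; exists u.
      have wc : forall u, u \in w i |: S -> connect [rel x y | (x,y) \in
          [set (a, w i) | a in S] :|: [set (w i, a) | a in S]] (w i) u.
        move=> u; rewrite !inE => /orP [/eqP->|uS]; first exact: connect0.
        by apply: connect1; rewrite /= inE; apply/orP; right; apply/imsetP; exists u.
      apply/forall_inP => u uS; apply/forall_inP => v vS.
      exact: connect_trans (cw u uS) (wc v vS).
- move=> i j ij; split.
  + rewrite /Vs; case: (ltnP i) => hi; case: (ltnP j) => hj.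
    * exact: setIid.
    * by apply/setIidPl; exact: subsetUr.
    * by apply/setIidPr; exact: subsetUr.
    * apply/setP => x; rewrite !inE.
      have wi := wS i hi; have wj := wS j hj.
      have wij : w i != w j by apply/eqP => /(winj _ _ hi hj) e; move: ij; rewrite e eqxx.
      case: (x =P w i) => [->|_] /=; first by rewrite (negbTE wi) (negbTE wij).
      by case: (x == w j); case: (x \in S).
  + apply/disjP => -[a b]; rewrite /As; case: (ltnP i) => hi; case: (ltnP j) => hj.
    * move=> /imsetP [x _ [-> ->]] /imsetP [y _ [/hinj e1 /hinj]]; subst y => e2.
      have e3 := hI x i j hi hj e2; move: ij; suff -> : i = j by rewrite eqxx.
      by apply: val_inj.
    * move=> /imsetP [x _ [-> ->]]; have := wS j hj; rewrite inE => wj.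
      by case/orP => /imsetP [c cS' [e1 e2]]; move: wj; rewrite -?e1 -?e2 hS.
    * move=> ha /imsetP [x _ [e1 e2]]; have := wS i hi; move: ha; rewrite e1 e2 inE.
      by case/orP => /imsetP [c cS' [e3 e4]]; rewrite -?e3 -?e4 hS.
    * have wi := wS i hi; have wj := wS j hj.
      have wij : w i != w j by apply/eqP => /(winj _ _ hi hj) e; move: ij; rewrite e eqxx.
      rewrite !inE => /orP [] /imsetP [c cS' [-> ->]] /orP [] /imsetP [d dS [e1 e2]].
      - by move: wij; rewrite e2 eqxx.
      - by move: wj; rewrite -e1 cS'.
      - by move: wj; rewrite -e2 cS'.
      - by move: wij; rewrite e1 eqxx.
Qed.

Lemma extract (V : finType) (D : rel V) (S : {set V}) k :
  (forall u v, D u v = (u != v)) -> #|S| = k -> 1 < k -> S_packing D S (#|V| - 1) ->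
  exists s, HD k s.
Proof.
move=> Dc cS k1 /S_packingP [Vs [As pk]].
have pk' := pk; case: pk' => [h1 h2].
pose n := #|V|.
have kn : k <= n by rewrite -cS max_card.
have other : forall u, u \in S -> exists v, v \in S /\ u != v.
  move=> u uS; have : 1 < #|S| by rewrite cS.
  case/card_gt1P => a [b [aS bS ab]].
  case: (u =P a) => [->|ua]; first by exists b.
  by exists a; split => //; apply/eqP.
have outA : forall i u, u \in S -> (u, outn (As i) u) \in As i.
  move=> i u uS; have [v [vS uv]] := other u uS.
  apply: outnP; exact: out_arc pk uS vS uv i.
have arcD : forall i a b, (a,b) \in As i -> a != b.
  move=> i a b ab; case: (h1 i) => sg _ _; case: (subgraphP sg ab); by rewrite Dc.
have uniq_out : forall i u w, u \in S -> (u,w) \in As i -> w = outn (As i) u.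
  move=> i u w uS uw; have [v [vS uv]] := other u uS.
  have inj := outn_inj pk uS vS uv.
  pose phi := fun j : 'I_(n-1) => outn (As j) u.
  have sub : [set phi j | j in 'I_(n-1)] \subset [set~ u].
    apply/subsetP => z /imsetP [j _ ->]; rewrite !inE eq_sym; exact: (arcD j _ _ (outA j u uS)).
  have eqs : [set phi j | j in 'I_(n-1)] = [set~ u].
    apply/eqP; rewrite eqEcard sub /= card_imset // cardsC1 card_ord; lia.
  have : w \in [set~ u] by rewrite !inE eq_sym; exact: (arcD i _ _ uw).
  rewrite -eqs => /imsetP [j _ ew]; rewrite ew in uw *.
  case: (i =P j) => [-> //|/eqP ij].
  have [_ /disjP d] := h2 i j ij; exfalso; apply: (d (u, phi j)); first exact: uw.
  exact: outA.
pose Int := [set i : 'I_(n-1) | Vs i \subset S].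
have cInt : k.-1 <= #|Int|.
  have [x0 x0S] : exists x0, x0 \in S by apply/set0Pn; rewrite -card_gt0 cS; lia.
  pose psi := fun i : 'I_(n-1) => odflt x0 [pick w | w \in Vs i :\: S].
  have psiP : forall i, i \in ~: Int -> psi i \in Vs i :\: S.
    move=> i; rewrite !inE => /subsetPn [w wV wS].
    rewrite /psi; case: pickP => [z hz|none] /=; first by move: hz; rewrite !inE.
    by have := none w; rewrite !inE wS wV.
  have pinj : {in ~: Int &, injective psi}.
    move=> i j hi hj e; apply/eqP; apply/negPn/negP => ij.
    have [e2 _] := h2 i j ij.
    have := psiP i hi; rewrite !inE => /andP [wS wV].
    have := psiP j hj; rewrite !inE -e => /andP [_ wV'].
    have : psi i \in Vs i :&: Vs j by rewrite inE wV wV'.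
    by rewrite e2 (negbTE wS).
  have cE : #|~: Int| <= n - k.
    rewrite -(card_in_imset pinj).
    have -> : n - k = #|~: S| by rewrite cardsCs setCK cS.
    apply: subset_leq_card; apply/subsetP => z /imsetP [i hi ->].
    by have := psiP i hi; rewrite !inE => /andP [].
  have := cardsC Int; rewrite card_ord; lia.
have n1 : 0 < n - 1 by lia.
pose i0 : 'I_(n-1) := Ordinal n1.
pose iota_ (j : nat) := nth i0 (enum Int) j.
have iotaI : forall j, j < k.-1 -> iota_ j \in Int.
  by move=> j jk; rewrite -mem_enum mem_nth // -cardE; lia.
have iota_inj : forall i j, i < k.-1 -> j < k.-1 -> iota_ i = iota_ j -> i = j.
  move=> i j ik jk /eqP; rewrite nth_uniq ?enum_uniq // -?cardE; [by move/eqP| lia | lia].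
have [x0 x0S] : exists x0, x0 \in S by apply/set0Pn; rewrite -card_gt0 cS; lia.
have k0 : 0 < k by lia.
pose j0 : 'I_k := Ordinal k0.
have sz : size (enum S) = k by rewrite -cardE.
pose h (x : 'I_k) := nth x0 (enum S) x.
pose hinv (v : V) : 'I_k := insubd j0 (index v (enum S)).
have hS x : h x \in S by rewrite -mem_enum mem_nth // sz.
have hK v : v \in S -> h (hinv v) = v.
  move=> vS; have ix : index v (enum S) < k by rewrite -[k]sz index_mem mem_enum.
  by rewrite /h /hinv val_insubd ix nth_index ?mem_enum.
have hinvK x : hinv (h x) = x.
  apply: val_inj; rewrite /hinv /h val_insubd index_uniq ?enum_uniq ?sz //.
  by rewrite ltn_ord.
pose tau i u := outn (As i) u.
have tauS : forall i u, i \in Int -> u \in S -> tau i u \in S.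
  move=> i u; rewrite inE => /subsetP sub uS; apply: sub.
  case: (h1 i) => sg _ _; by case: (subgraphP sg (outA i u uS)).
exists (fun j x => hinv (tau (iota_ j) (h x))); split.
- move=> j jk x y; have Ii := iotaI j jk; set i := iota_ j in Ii *.
  have [_ sub st] := h1 i.
  have c := strongP st (subsetP sub _ (hS x)) (subsetP sub _ (hS y)).
  have : fconnect (tau i) (h x) (h y).
    apply: (connect_sub _ c) => a b /= ab.
    have aS : a \in S.
      move: Ii; rewrite inE => /subsetP; apply.
      case: (h1 i) => sg _ _; by case: (subgraphP sg ab).
    by apply: connect1; rewrite /= /tau -(uniq_out i a b aS ab).
  move=> /iter_findex; set m := findex _ _ _ => hm.
  have gen : forall m, iter m (tau i) (h x) \in S /\
      iter m (fun x => hinv (tau i (h x))) x = hinv (iter m (tau i) (h x)).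
    elim=> [|m' [IHS IH]] /=; first by rewrite hinvK hS.
    by rewrite IH hK // tauS.
  have [_ e] := gen m; rewrite -(hinvK y) -hm -e; exact: fconnect_iter.
- move=> x i j ik jk e.
  have Ii := iotaI i ik; have Ij := iotaI j jk.
  have e2 : tau (iota_ i) (h x) = tau (iota_ j) (h x).
    by rewrite -(hK _ (tauS _ _ Ii (hS x))) e hK // tauS.
  apply: iota_inj => //; apply/eqP; apply/negPn/negP => ij.
  have [_ /disjP d] := h2 _ _ ij; apply: (d (h x, tau (iota_ i) (h x))); first exact: outA.
  by rewrite e2; exact: outA.
- move=> j x jk; apply/eqP => e.
  have Ii := iotaI j jk.
  have := arcD _ _ _ (outA (iota_ j) (h x) (hS x)).
  by rewrite -/(tau (iota_ j) (h x)) -(hK _ (tauS _ _ Ii (hS x))) e eqxx.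
Qed.

Lemma outdeg_le (V : finType) (D : rel V) u : irreflexive D -> #|[set w | D u w]| <= #|V| - 1.
Proof.
move=> irr; have : [set w | D u w] \subset [set~ u].
  by apply/subsetP => w; rewrite !inE; apply: contraTneq => ->; rewrite irr.
move/subset_leq_card; rewrite cardsC1; lia.
Qed.

Lemma upper (V : finType) (D : rel V) k : irreflexive D -> 2 <= k <= #|V| ->
  kappa_k D k <= #|V| - 1.
Proof.
move=> irr /andP [k2 kn].
have [S [_ cS]] : exists S : {set V}, S \subset setT /\ #|S| = k by apply: subset_card; rewrite cardsT.
apply: leq_trans (kk_le D cS) _; apply: kS_le => p /S_packingP [Vs [As pk]].
have : 1 < #|S| by rewrite cS.
case/card_gt1P => u [v [uS vS uv]].
exact: leq_trans (outdeg_bound pk uS vS uv) (outdeg_le u irr).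
Qed.

Lemma lower (V : finType) (D : rel V) k : strong D -> 2 <= k <= #|V| -> 1 <= kappa_k D k.
Proof.
move=> st /andP [k2 kn].
have n2 : 1 <= #|V|^2 by rewrite expn_gt0; lia.
apply: kk_ge => // S _; apply: kS_ge => //.
apply/S_packingP; exists (fun _ => setT), (fun _ => [set a | D a.1 a.2]); split.
- move=> i; split.
  + by apply/forall_inP => a; rewrite !inE => ->.
  + exact: subsetT.
  + apply/forall_inP => u _; apply/forall_inP => v _.
    have eqc : connect [rel x y | (x,y) \in [set a | D a.1 a.2]] =2 connect D.
      by apply: eq_connect => x y; rewrite /= inE.
    by rewrite eqc; exact: (st u v).
- by move=> i j; rewrite !ord1 eqxx.
Qed.

Lemma complete_kappa (V : finType) (D : rel V) k : (forall u v, D u v = (u != v)) ->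
  2 <= k <= #|V| -> k != 4 -> k != 6 -> kappa_k D k = #|V| - 1.
Proof.
move=> Dc hk k4 k6; apply/eqP; rewrite eqn_leq; apply/andP; split.
  by apply: upper hk => x; rewrite Dc eqxx.
case/andP: hk => k2 kn.
have n2 : #|V| - 1 <= #|V|^2 by rewrite expnS; apply: leq_trans (leq_subr 1 _) _; apply: leq_pmulr; lia.
apply: kk_ge => // S cS; apply: kS_ge => //.
have [s hs] := HD_exists k2 k4 k6.
exact: (construct Dc cS k2 hs).
Qed.

Lemma forward (V : finType) (D : rel V) k : irreflexive D -> 2 <= k <= #|V| ->
  kappa_k D k = #|V| - 1 -> (forall u v, D u v = (u != v)) /\ (k != 4) && (k != 6).
Proof.
move=> irr hk e; case/andP: hk => k2 kn.
have Dc : forall u v, D u v = (u != v).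
  move=> u v; case: (u =P v) => [->|/eqP uv]; first by rewrite irr.
  case Duv: (D u v); first by [].
  exfalso.
  have [B [Bs cB]] : exists B : {set V}, B \subset [set~ u] /\ #|B| = k.-1.
    by apply: subset_card; rewrite cardsC1; lia.
  have uB : u \notin B by apply/negP => /(subsetP Bs); rewrite !inE eqxx.
  have cS : #|u |: B| = k by rewrite cardsU1 uB cB; lia.
  have [v' v'B] : exists v', v' \in B by apply/set0Pn; rewrite -card_gt0 cB; lia.
  have uv' : u != v' by apply/eqP => e'; move: uB; rewrite e' v'B.
  have hle : kappaS D (u |: B) <= #|V| - 2.
    apply: kS_le => p /S_packingP [Vs [As pk]].
    apply: leq_trans (outdeg_bound pk (setU11 u B) (setU1r u v'B) uv') _.
    have : [set w | D u w] \subset [set~ u] :\ v.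
      apply/subsetP => w; rewrite inE => Duw.
      have wv : w != v by apply/eqP => ewv; move: Duv; rewrite -ewv Duw.
      have wu : w != u by apply/eqP => ewu; move: Duw; rewrite ewu irr.
      by rewrite !inE wv wu.
    move/subset_leq_card => hc.
    have := cardsD1 v [set~ u]; rewrite !inE eq_sym uv cardsC1 /=; lia.
  have := kk_le D cS; rewrite e; lia.
split => //.
have [S [_ cS]] : exists S : {set V}, S \subset setT /\ #|S| = k by apply: subset_card; rewrite cardsT.
have hS : kappaS D S = #|V| - 1.
  apply/eqP; rewrite eqn_leq; apply/andP; split; last by rewrite -e; exact: kk_le.
  apply: kS_le => p /S_packingP [Vs [As pk]].
  have : 1 < #|S| by rewrite cS.
  case/card_gt1P => u [v [uS vS uv]].
  exact: leq_trans (outdeg_bound pk uS vS uv) (outdeg_le u irr).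
have := kS_attain D S; rewrite hS => hp.
have [s hs] := extract Dc cS k2 hp.
apply/andP; split; apply/eqP => ek; move: s hs; rewrite ek => s hs.
- exact: no_HD4 hs.
- exact: no_HD6 hs.
Qed.

Lemma iso_complete (V : finType) (D : rel V) n : digraph_iso D (@complete_digraph n) ->
  forall u v, D u v = (u != v).
Proof.
case=> f [/bij_inj fi e] u v; by rewrite e /complete_digraph (inj_eq fi).
Qed.

Lemma complete_iso (V : finType) (D : rel V) n : (forall u v, D u v = (u != v)) -> #|V| = n ->
  digraph_iso D (@complete_digraph n).
Proof.
move=> Dc cV; exists (fun v => cast_ord cV (enum_rank v)); split.
  exists (fun i => enum_val (cast_ord (esym cV) i)) => [v|i].
    by rewrite cast_ordK enum_rankK.
  by rewrite enum_valK cast_ordKV.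
move=> u v; rewrite Dc /complete_digraph (inj_eq (@cast_ord_inj _ _ cV)) (inj_eq enum_rank_inj) //.
Qed.

Definition gcyc n x := if x.+1 == n then 0 else x.+1.

Lemma gcyc_reach n d x : x < n -> x + d = n -> iter d (gcyc n) x = 0.
Proof.
elim: d x => [|d IH] x xn e; first by lia.
rewrite iterSr /gcyc; case: eqP => [h|h].
  by have -> : d = 0 by lia.
apply: IH; lia.
Qed.

Theorem theorem3p5 (n k : nat) : 2 <= k <= n ->
  (forall (V : finType) (D : rel V), irreflexive D -> #|V| = n -> strong D ->
     1 <= kappa_k D k <= n - 1 /\
     (kappa_k D k = n - 1 <->
        digraph_iso D (@complete_digraph n) /\ k \notin [:: 4; 6]))
  /\ (exists (V : finType) (D : rel V),
        [/\ irreflexive D, #|V| = n, strong D & kappa_k D k = 1])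
  /\ (k \notin [:: 4; 6] -> exists (V : finType) (D : rel V),
        [/\ irreflexive D, #|V| = n, strong D & kappa_k D k = n - 1]).
Proof.
move=> hk; have hk' := hk; case/andP: hk' => k2 kn.
have n2 : 1 < n by lia.
have nin : forall k, (k \notin [:: 4; 6]) = (k != 4) && (k != 6).
  by move=> j; rewrite !inE negb_or.
split; [|split].
- move=> V D irr cV st; subst n; split.
    by rewrite lower // upper.
  split.
  + move=> e; have [Dc k46] := forward irr hk e; split; first exact: complete_iso.
    by rewrite nin.
  + case=> iso; rewrite nin => /andP [k4 k6].
    exact: complete_kappa (iso_complete iso) hk k4 k6.
- have hg : forall y, y < n -> gcyc n y < n by move=> y yn; rewrite /gcyc; case: eqP => ?; lia.
  pose D := [rel u v : 'I_n | liftF (gcyc n) u == v].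
  have irr : irreflexive D.
    move=> u; rewrite /D /=; apply/negP => /eqP /(congr1 (@nat_of_ord n)); rewrite liftF_val //.
    rewrite /gcyc; case: eqP => ?; lia.
  have st : strong D.
    move=> u v; apply: reach_fconnect => //.
    apply: (@reach_sym n (gcyc n) 0) => //; first lia.
    + move=> a b an bn; rewrite /gcyc; case: eqP; case: eqP => ?; lia.
    + by move=> x xn; exists (n - x); apply: gcyc_reach => //; lia.
  exists 'I_n, D; split => //; first by rewrite card_ord.
  apply/eqP; rewrite eqn_leq; apply/andP; split; last first.
    by apply: lower => //; rewrite card_ord.
  have [S [_ cS]] : exists S : {set 'I_n}, S \subset setT /\ #|S| = k.
    by apply: subset_card; rewrite cardsT card_ord.
  apply: leq_trans (kk_le D cS) _; apply: kS_le => p /S_packingP [Vs [As pk]].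
  have : 1 < #|S| by rewrite cS.
  case/card_gt1P => u [v [uS vS uv]].
  apply: leq_trans (outdeg_bound pk uS vS uv) _.
  have : [set w | D u w] \subset [set liftF (gcyc n) u].
    by apply/subsetP => w; rewrite !inE /= eq_sym.
  by move/subset_leq_card; rewrite cards1.
- rewrite nin => /andP [k4 k6].
  exists 'I_n, (@complete_digraph n).
  have irr : irreflexive (@complete_digraph n) by move=> u; rewrite /complete_digraph eqxx.
  split => //; first by rewrite card_ord.
  + move=> u v; case: (u =P v) => [->|/eqP uv]; first exact: connect0.
    by apply: connect1.
  + rewrite complete_kappa ?card_ord //; by rewrite card_ord.
Qed.
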